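(* Let $p_{0,0},p_{1,0}\in[0,1]$ with $p_{0,0}>p_{1,0}$ (positively correlated arm), $0\le\rho_0<\rho_1\le1$, and $K\ge1$ an integer. Then the belief updates $\gamma_0,\gamma_1,\gamma_2$ defined in the context are increasing in $\pi\in[0,1]$; moreover $\gamma_1$ is convex and $\gamma_0$ is concave, and $p_{1,0}\le\gamma_1(\pi)\le\gamma_0(\pi)\le p_{0,0}$ for all $\pi\in[0,1]$.
   Context: For $\pi\in[0,1]$ define $\gamma_1(\pi)=\frac{(1-\pi)\rho_1p_{1,0}+\pi\rho_0p_{0,0}}{\rho_1(1-\pi)+\rho_0\pi}$, $\gamma_0(\pi)=\frac{(1-\pi)(1-\rho_1)p_{1,0}+\pi(1-\rho_0)p_{0,0}}{(1-\rho_1)(1-\pi)+(1-\rho_0)\pi}$, $\gamma_2(\pi)=(p_{0,0}-p_{1,0})^K\pi+p_{1,0}\sum_{j=0}^{K-1}(p_{0,0}-p_{1,0})^j$. (These are the posterior probabilities of hidden state $0$ of a two-state Markov chain with transition probabilities $p_{i,0}$ from state $i$ to $0$, after respectively an ACK, a NACK, or no play; $\rho_i$ is the ACK probability in state $i$.) *)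

(* Defs.v *)
From mathcomp Require Import all_boot all_order all_algebra.
Set Implicit Arguments. Unset Strict Implicit. Unset Printing Implicit Defensive.
Import Order.TTheory GRing.Theory Num.Theory.
Local Open Scope ring_scope.

Section Beliefs.
Variable R : realFieldType.

Definition den1 (rho0 rho1 pi : R) : R := rho1 * (1 - pi) + rho0 * pi.
Definition den0 (rho0 rho1 pi : R) : R := (1 - rho1) * (1 - pi) + (1 - rho0) * pi.

(* posterior of state 0 after an ACK *)
Definition gamma1 (p00 p10 rho0 rho1 pi : R) : R :=
  ((1 - pi) * rho1 * p10 + pi * rho0 * p00) / den1 rho0 rho1 pi.

(* posterior of state 0 after a NACK *)
Definition gamma0 (p00 p10 rho0 rho1 pi : R) : R :=
  ((1 - pi) * (1 - rho1) * p10 + pi * (1 - rho0) * p00) / den0 rho0 rho1 pi.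

(* belief after K steps with no play *)
Definition gamma2 (p00 p10 : R) (K : nat) (pi : R) : R :=
  (p00 - p10) ^+ K * pi + p10 * \sum_(j < K) (p00 - p10) ^+ j.

Definition in01 (x : R) : Prop := 0 <= x /\ x <= 1.

Definition nondecreasing_on (D : R -> Prop) (f : R -> R) : Prop :=
  forall x y, D x -> D y -> x <= y -> f x <= f y.

Definition convex_on (D : R -> Prop) (f : R -> R) : Prop :=
  forall x y t, D x -> D y -> 0 <= t -> t <= 1 ->
    f (t * x + (1 - t) * y) <= t * f x + (1 - t) * f y.

Definition concave_on (D : R -> Prop) (f : R -> R) : Prop :=
  forall x y t, D x -> D y -> 0 <= t -> t <= 1 ->
    t * f x + (1 - t) * f y <= f (t * x + (1 - t) * y).

End Beliefs.

(* Main.v *)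
Require Import Defs.
From mathcomp Require Import all_boot all_order all_algebra.
From mathcomp Require Import ring lra.
Import Order.TTheory GRing.Theory Num.Theory.
Local Open Scope ring_scope.

Lemma harm (R : realFieldType) (u v t : R) : 0 < u -> 0 < v -> 0 <= t -> t <= 1 ->
  (t * u + (1 - t) * v)^-1 <= t / u + (1 - t) / v.
Proof.
move=> hu hv ht0 ht1.
have hw : 0 < t * u + (1 - t) * v by nra.
have key : (t / u + (1 - t) / v) * (t * u + (1 - t) * v) - 1
         = t * (1 - t) * (u - v) ^+ 2 / (u * v).
  by field; apply/andP; split; rewrite gt_eqF.
rewrite -div1r ler_pdivrMr //.
have : 0 <= t * (1 - t) * (u - v) ^+ 2 / (u * v).
  apply: divr_ge0; last by nra.
  by apply: mulr_ge0; [nra | apply: sqr_ge0].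
rewrite -key; lra.
Qed.

Section S.
Variable R : realFieldType.

Lemma g1E (p00 p10 rho0 rho1 pi : R) : rho1 - rho0 != 0 -> den1 rho0 rho1 pi != 0 ->
  gamma1 p00 p10 rho0 rho1 pi =
  - (rho0 * p00 - rho1 * p10) / (rho1 - rho0)
  + rho1 * rho0 * (p00 - p10) / (rho1 - rho0) / den1 rho0 rho1 pi.
Proof.
move=> hd hn; rewrite /gamma1; move: hn; rewrite /den1 => hn.
by field; apply/andP; split.
Qed.

Lemma g0E (p00 p10 rho0 rho1 pi : R) : rho1 - rho0 != 0 -> den0 rho0 rho1 pi != 0 ->
  gamma0 p00 p10 rho0 rho1 pi =
  ((1 - rho0) * p00 - (1 - rho1) * p10) / (rho1 - rho0)
  - (1 - rho1) * (1 - rho0) * (p00 - p10) / (rho1 - rho0) / den0 rho0 rho1 pi.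
Proof.
move=> hd hn; rewrite /gamma0; move: hn; rewrite /den0 => hn.
by field; apply/andP; split.
Qed.
End S.

Theorem lemma2 (R : realFieldType) (p00 p10 rho0 rho1 : R) (K : nat) :
  0 <= p10 -> p10 < p00 -> p00 <= 1 ->
  0 <= rho0 -> rho0 < rho1 -> rho1 <= 1 ->
  (1 <= K)%N ->
  let D1 := fun pi : R => in01 pi /\ den1 rho0 rho1 pi != 0 in
  let D0 := fun pi : R => in01 pi /\ den0 rho0 rho1 pi != 0 in
  [/\ [/\ nondecreasing_on D1 (gamma1 p00 p10 rho0 rho1),
          nondecreasing_on D0 (gamma0 p00 p10 rho0 rho1) &
          nondecreasing_on (@in01 R) (gamma2 p00 p10 K)],
      convex_on D1 (gamma1 p00 p10 rho0 rho1),
      concave_on D0 (gamma0 p00 p10 rho0 rho1) &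
      forall pi : R, D1 pi -> D0 pi ->
        [/\ p10 <= gamma1 p00 p10 rho0 rho1 pi,
            gamma1 p00 p10 rho0 rho1 pi <= gamma0 p00 p10 rho0 rho1 pi &
            gamma0 p00 p10 rho0 rho1 pi <= p00]].
Proof.
move=> h1 h2 h3 h4 h5 h6 hK D1 D0.
have hd : rho1 - rho0 != 0 by rewrite subr_eq0 gt_eqF.
have hdp : 0 < rho1 - rho0 by lra.
have pos1 : forall x, D1 x -> 0 < den1 rho0 rho1 x.
  move=> x [[hx0 hx1] hn]; rewrite lt_def hn /= /den1; nra.
have pos0 : forall x, D0 x -> 0 < den0 rho0 rho1 x.
  move=> x [[hx0 hx1] hn]; rewrite lt_def hn /= /den0; nra.
set B1 := rho1 * rho0 * (p00 - p10) / (rho1 - rho0).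
set B0 := (1 - rho1) * (1 - rho0) * (p00 - p10) / (rho1 - rho0).
have hB1 : 0 <= B1 by apply: divr_ge0; [apply: mulr_ge0; nra | lra].
have hB0 : 0 <= B0 by apply: divr_ge0; [apply: mulr_ge0; nra | lra].
have lin1 : forall x y t, den1 rho0 rho1 (t * x + (1 - t) * y) =
   t * den1 rho0 rho1 x + (1 - t) * den1 rho0 rho1 y by move=> *; rewrite /den1; ring.
have lin0 : forall x y t, den0 rho0 rho1 (t * x + (1 - t) * y) =
   t * den0 rho0 rho1 x + (1 - t) * den0 rho0 rho1 y by move=> *; rewrite /den0; ring.
split; [split| | |].
- move=> x y hx hy hxy.
  have hx2 := hx.2; have hy2 := hy.2; rewrite !g1E //.
  rewrite -/B1 lerD2l !(mulrC B1) ler_wpM2r // lef_pV2 ?posrE ?pos1 //.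
  rewrite /den1; nra.
- move=> x y hx hy hxy.
  have hx2 := hx.2; have hy2 := hy.2; rewrite !g0E //.
  rewrite -/B0 lerD2l lerN2 !(mulrC B0) ler_wpM2r // lef_pV2 ?posrE ?pos0 //.
  rewrite /den0; nra.
- move=> x y [hx0 hx1] [hy0 hy1] hxy; rewrite /gamma2 lerD2r.
  by apply: ler_wpM2l => //; apply: exprn_ge0; lra.
- move=> x y t hx hy ht0 ht1.
  have hz : den1 rho0 rho1 (t * x + (1 - t) * y) != 0.
    by rewrite lin1 gt_eqF //; have := pos1 _ hx; have := pos1 _ hy; nra.
  have hx2 := hx.2; have hy2 := hy.2; rewrite !g1E //.
  rewrite -/B1 lin1.
  have := @harm _ _ _ _ (pos1 _ hx) (pos1 _ hy) ht0 ht1.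
  move=> H.
  have := ler_wpM2l hB1 H; lra.
- move=> x y t hx hy ht0 ht1.
  have hz : den0 rho0 rho1 (t * x + (1 - t) * y) != 0.
    by rewrite lin0 gt_eqF //; have := pos0 _ hx; have := pos0 _ hy; nra.
  have hx2 := hx.2; have hy2 := hy.2; rewrite !g0E //.
  rewrite -/B0 lin0.
  have := @harm _ _ _ _ (pos0 _ hx) (pos0 _ hy) ht0 ht1.
  move=> H.
  have := ler_wpM2l hB0 H; lra.
- move=> pi hD1 hD0.
  have p1 := pos1 _ hD1; have p0 := pos0 _ hD0.
  case: hD1 => [[hp0 hp1] _].
  move: p1 p0; rewrite /gamma1 /gamma0 => p1 p0.
  split.
  + rewrite ler_pdivlMr //.
    have : 0 <= pi * rho0 * (p00 - p10) by apply: mulr_ge0; nra.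
    have E : (1 - pi) * rho1 * p10 + pi * rho0 * p00 - p10 * den1 rho0 rho1 pi
      = pi * rho0 * (p00 - p10) by rewrite /den1; ring.
    lra.
  + rewrite ler_pdivrMr // [X in _ <= X]mulrAC ler_pdivlMr //.
    have : 0 <= (p00 - p10) * pi * (1 - pi) * (rho1 - rho0).
      by apply: mulr_ge0; [apply: mulr_ge0; nra | lra].
    have E : ((1 - pi) * (1 - rho1) * p10 + pi * (1 - rho0) * p00) * den1 rho0 rho1 pi
      - ((1 - pi) * rho1 * p10 + pi * rho0 * p00) * den0 rho0 rho1 pi
      = (p00 - p10) * pi * (1 - pi) * (rho1 - rho0) by rewrite /den1 /den0; ring.
    lra.
  + rewrite ler_pdivrMr //.
    have : 0 <= (1 - pi) * (1 - rho1) * (p00 - p10) by apply: mulr_ge0; nra.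
    have E : p00 * den0 rho0 rho1 pi - ((1 - pi) * (1 - rho1) * p10 + pi * (1 - rho0) * p00)
      = (1 - pi) * (1 - rho1) * (p00 - p10) by rewrite /den0; ring.
    lra.
Qed.
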